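(* Let $G=(V,E)$ be a finite, simple, undirected graph with $m=|E|\ge 1$ edges and no isolated vertices. Then for every partition $\Pi$ of $V$ into nonempty sets, the total null-adjusted persistence satisfies $\mathcal{P}^{\star}_{\Pi}\ge -1$. Moreover, if $G$ is multipartite, i.e. $V$ admits a partition $\Pi=\{V_1,\dots,V_k\}$ into nonempty independent sets (no edge has both endpoints in the same $V_j$), then $\mathcal{P}^{\star}_{\Pi}=-1$ for this canonical partition $\Pi$.
   Context: For a subset $\mathcal{C}\subseteq V$, let $m_i(\mathcal{C})$ be the number of edges with both endpoints in $\mathcal{C}$ and $m_e(\mathcal{C})$ the number of edges with exactly one endpoint in $\mathcal{C}$ (so $2m_i+m_e=\sum_{v\in\mathcal{C}}\deg v>0$ for nonempty $\mathcal{C}$ when there are no isolated vertices). The null-adjusted persistence of $\mathcal{C}$ is $\mathcal{P}^{\star}_{\mathcal{C}}=\frac{2m_i}{2m_i+m_e}-\frac{2m_i+m_e}{2m}$, where $m=|E|$. For a partition $\Pi$ of $V$, the total null-adjusted persistence is $\mathcal{P}^{\star}_{\Pi}=\sum_{\mathcal{C}\in\Pi}\mathcal{P}^{\star}_{\mathcal{C}}$. *)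

(* Defs.v *)
From mathcomp Require Import all_boot all_order all_algebra.
Set Implicit Arguments. Unset Strict Implicit. Unset Printing Implicit Defensive.
Import Order.TTheory GRing.Theory Num.Theory.

Definition simple_graph (T : finType) (e : rel T) : Prop :=
  symmetric e /\ irreflexive e.

Definition edges (T : finType) (e : rel T) : {set {set T}} :=
  [set E : {set T} | [exists x, exists y, e x y && (E == [set x; y])]].

Definition num_edges (T : finType) (e : rel T) : nat := #|edges e|.

Definition deg (T : finType) (e : rel T) (v : T) : nat := #|[set w | e v w]|.

Definition no_isolated (T : finType) (e : rel T) : Prop :=
  forall v : T, (0 < deg e v)%N.

Definition m_int (T : finType) (e : rel T) (C : {set T}) : nat :=
  #|[set E in edges e | E \subset C]|.

Definition m_ext (T : finType) (e : rel T) (C : {set T}) : nat :=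
  #|[set E in edges e | #|E :&: C| == 1%N]|.

Local Open Scope ring_scope.

Definition persistence (R : realFieldType) (T : finType) (e : rel T)
    (C : {set T}) : R :=
  let mi := (m_int e C)%:R in
  let me := (m_ext e C)%:R in
  let m := (num_edges e)%:R in
  (2 * mi) / (2 * mi + me) - (2 * mi + me) / (2 * m).

Definition total_persistence (R : realFieldType) (T : finType) (e : rel T)
    (P : {set {set T}}) : R :=
  \sum_(C in P) persistence R e C.

Definition independent (T : finType) (e : rel T) (C : {set T}) : bool :=
  [forall x in C, forall y in C, ~~ e x y].

(* Main.v *)
Require Import Defs.
From mathcomp Require Import all_boot all_order all_algebra.
From mathcomp Require Import lra.
Import Order.TTheory GRing.Theory Num.Theory.
Local Open Scope ring_scope.

Section Aux.
Variable T : finType.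

Lemma L1 (A : {set {set T}}) (Q : pred {set T}) :
  #|[set E in A | Q E]| = (\sum_(E in A) (Q E : nat))%N.
Proof.
rewrite -sum1_card big_mkcond [RHS]big_mkcond /=.
apply: eq_bigr => E _; rewrite !inE; by case: (E \in A); case: (Q E).
Qed.

Lemma L0 (A B : {set T}) : (\sum_(x in A) (x \in B : nat))%N = #|A :&: B|.
Proof.
rewrite -sum1_card big_mkcond [RHS]big_mkcond /=.
apply: eq_bigr => x _; rewrite !inE; by case: (x \in A); case: (x \in B).
Qed.

Lemma key (E C : {set T}) : #|E| = 2%N ->
  (2 * (E \subset C) + (#|E :&: C| == 1%N))%N = #|E :&: C|.
Proof.
move=> hE.
have hs : (E \subset C) = (#|E :&: C| == 2%N).
  apply/idP/idP.
    by move/setIidPl => ->; rewrite hE.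
  move=> /eqP h; apply/setIidPl; apply/eqP; rewrite eqEcard subsetIl h hE //.
have hle : (#|E :&: C| <= 2)%N by rewrite -hE; apply: subset_leq_card; apply: subsetIl.
rewrite hs; move: hle; case: #|E :&: C| => [|[|[|]]] //.
Qed.

Lemma L3 (P : {set {set T}}) (E : {set T}) : partition P [set: T] ->
  #|E| = (\sum_(C in P) #|E :&: C|)%N.
Proof.
case/and3P => /eqP hcov htriv _.
have := @big_trivIset T nat 0%N addn P (fun x => (x \in E : nat)) htriv.
rewrite hcov /= L0 setTI => ->.
apply: eq_bigr => C _; by rewrite L0 setIC.
Qed.

Lemma edge2 (e : rel T) (E : {set T}) : irreflexive e -> E \in edges e -> #|E| = 2%N.
Proof.
move=> irr; rewrite inE => /existsP [x /existsP [y /andP [exy /eqP ->]]].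
rewrite cards2; case: eqP => // h; subst; by rewrite irr in exy.
Qed.

Lemma count_sum (e : rel T) (P : {set {set T}}) : irreflexive e ->
  partition P [set: T] ->
  (\sum_(C in P) (2 * m_int e C + m_ext e C))%N = (2 * num_edges e)%N.
Proof.
move=> irr hP.
rewrite /m_int /m_ext.
under eq_bigr => C _ do rewrite !L1 big_distrr /= -big_split /=.
rewrite exchange_big /=.
rewrite /num_edges -sum1_card big_distrr /=.
apply: eq_bigr => E hE.
rewrite muln1; transitivity (\sum_(C in P) #|E :&: C|)%N.
  apply: eq_bigr => C _; by rewrite key // (@edge2 e E irr hE).
by rewrite -(@L3 P E hP) (@edge2 e E irr hE).
Qed.

End Aux.

Theorem proposition3 (R : realFieldType) (T : finType) (e : rel T) :
  simple_graph e -> (1 <= num_edges e)%N -> no_isolated e ->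
  (forall P : {set {set T}}, partition P [set: T] ->
     -1 <= total_persistence R e P) /\
  (forall P : {set {set T}}, partition P [set: T] ->
     (forall C, C \in P -> independent e C) ->
     total_persistence R e P = -1).
Proof.
move=> [sym irr] hm _.
have base : forall P : {set {set T}}, partition P [set: T] ->
  total_persistence R e P =
  \sum_(C in P) ((2 * (m_int e C)%:R) / (2 * (m_int e C)%:R + (m_ext e C)%:R)) - 1.
  move=> P hP.
  rewrite /total_persistence /persistence sumrB -mulr_suml.
  congr (_ - _).
  have H := congr1 (fun n : nat => n%:R : R) (@count_sum T e P irr hP).
  rewrite /= natr_sum in H.
  have -> : \sum_(C in P) (2 * (m_int e C)%:R + (m_ext e C)%:R) = 2 * (num_edges e)%:R :> R.
    rewrite natrM in H; rewrite -H; apply: eq_bigr => C _; by rewrite natrD natrM.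
  apply: mulfV; apply: mulf_neq0; first by rewrite pnatr_eq0.
  by rewrite pnatr_eq0 -lt0n.
split.
  move=> P hP; rewrite base //.
  have : 0 <= \sum_(C in P) ((2 * (m_int e C)%:R) / (2 * (m_int e C)%:R + (m_ext e C)%:R) : R).
    apply: sumr_ge0 => C _; apply: divr_ge0.
      by apply: mulr_ge0; [apply: ler0n | apply: ler0n].
    by apply: addr_ge0; [apply: mulr_ge0; apply: ler0n | apply: ler0n].
  lra.
move=> P hP hind; rewrite base // big1 ?sub0r // => C hC.
have -> : m_int e C = 0%N.
  rewrite /m_int; apply/eqP; rewrite cards_eq0; apply/eqP/setP => E.
  rewrite !inE; apply/negP => /andP [].
  move=> /existsP [x /existsP [y /andP [exy /eqP ->]]] hsub.
  have hx : x \in C by apply: (subsetP hsub); rewrite !inE eqxx.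
  have hy : y \in C by apply: (subsetP hsub); rewrite !inE eqxx orbT.
  move: (hind C hC) => /forallP /(_ x) /implyP /(_ hx) /forallP /(_ y) /implyP /(_ hy).
  by rewrite exy.
by rewrite mulr0 mul0r.
Qed.
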